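(* For every $n>0$, there are finite alphabets $\Sigma_I,\Sigma_O$ and a language $L_n''\subseteq(\Sigma_I\times\Sigma_O)^\omega$ recognized by a finitary Büchi automaton with costs $\mathcal{A}_n''$ with $O(n^2)$ states such that for every $j\in\{0,1,\ldots,n\}$, an optimal winning strategy for Player $O$ in $\Gamma_{f_j}(L_n'')$ exists and has cost $2(n+1)-j$.
   Context: A parity automaton with costs is a tuple $\mathcal{A}=(Q,\Sigma,q_I,\delta,\Omega,\mathrm{Cst})$ with a finite set $Q$ of states, a finite alphabet $\Sigma$, an initial state $q_I$, a deterministic complete transition function $\delta\colon Q\times\Sigma\to Q$, a coloring $\Omega\colon Q\to\mathbb{N}$, and a cost function $\mathrm{Cst}$ assigning to every transition $(q,a,\delta(q,a))$ either $\epsilon$ or $\mathtt{i}$ (increment-transition). A finitary Büchi automaton is one in which every transition is an increment-transition and $\Omega(Q)=\{1,2\}$. The run on $a_0a_1\cdots$ is $(q_0,a_0,q_1)(q_1,a_1,q_2)\cdots$ with $q_0=q_I$, $q_{j+1}=\delta(q_j,a_j)$; the cost of a finite run is its number of increment-transitions. For odd $c$, $\mathrm{Ans}(c)=\{c'\in\Omega(Q)\mid c'>c,\ c'\text{ even}\}$. For an infinite run $\rho$ and $n$, $\mathrm{Cor}(\rho,n)=0$ if $\Omega(q_n)$ is even, and otherwise it is the minimal cost of $(q_n,a_n,q_{n+1})\cdots(q_{n'-1},a_{n'-1},q_{n'})$ over $n'>n$ with $\Omega(q_{n'})\in\mathrm{Ans}(\Omega(q_n))$ ($\min\emptyset=\infty$).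 The run is accepting if $\limsup_n\mathrm{Cor}(\rho,n)<\infty$; $L(\mathcal{A})$ is the set of infinite words whose run is accepting. A delay function is a map $f\colon\mathbb{N}\to\mathbb{N}\setminus\{0\}$; for $k\ge0$, $f_k$ denotes the delay function with $f_k(0)=k+1$ and $f_k(i)=1$ for $i>0$. For $L\subseteq(\Sigma_I\times\Sigma_O)^\omega$, the delay game $\Gamma_f(L)$ is played in rounds $i=0,1,2,\ldots$: in round $i$, Player $I$ picks $u_i\in\Sigma_I^{f(i)}$, then Player $O$ picks $v_i\in\Sigma_O$. Player $O$ wins the play if the outcome, i.e., the word over $\Sigma_I\times\Sigma_O$ pairing $u_0u_1u_2\cdots$ and $v_0v_1v_2\cdots$ letterwise, is in $L$. A strategy for Player $O$ is a map $\tau_O\colon\Sigma_I^*\to\Sigma_O$; a play is consistent with $\tau_O$ if $v_i=\tau_O(u_0\cdots u_i)$ for all $i$; $\tau_O$ is winning if every consistent play is won by Player $O$. For a winning strategy $\tau_O$ in $\Gamma_f(L(\mathcal{A}))$, its cost is $\mathrm{Cst}_\mathcal{A}(\tau_O)=\sup_w\limsup_{n\to\infty}\mathrm{Cor}(\rho(w),n)$, where $w$ ranges over outcomes of plays consistent with $\tau_O$ and $\rho(w)$ is the run of $\mathcal{A}$ on $w$; a winning strategy is optimal if its cost is minimal among all winning strategies of Player $O$ in $\Gamma_f(L(\mathcal{A}))$. *)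

(* Defs.v *)
From mathcomp Require Import all_boot.
Set Implicit Arguments. Unset Strict Implicit. Unset Printing Implicit Defensive.

(* Deterministic complete parity automaton with costs over alphabet Sigma.
   incr q a = true  iff the transition (q,a,delta q a) is an increment-transition. *)
Record pcaut (Sigma : finType) := PCAut {
  st    : finType;
  qI    : st;
  delta : st -> Sigma -> st;
  col   : st -> nat;
  incr  : st -> Sigma -> bool   (* cost function Cst: true = i, false = epsilon *)
}.

Section Aut.
Variables (Sigma : finType) (A : pcaut Sigma).

Fixpoint run (w : nat -> Sigma) (n : nat) : st A :=
  match n with
  | 0 => qI A
  | n'.+1 => @delta _ A (run w n') (w n')
  end.

Definition seg_cost (w : nat -> Sigma) (n n' : nat) : nat :=
  count (fun k => @incr _ A (run w k) (w k)) (iota n (n' - n)).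

Definition is_answer (c c' : nat) : bool :=
  [&& c' \in codom (@col _ A), c < c' & ~~ odd c'].

(* Cor(rho(w), n) <= k  (for finite k), where Cor is 0 for even colors and
   otherwise the minimum (min of empty set = infinity) of the segment costs
   to an answering position. *)
Definition cor_le (w : nat -> Sigma) (n k : nat) : Prop :=
  ~~ odd (@col _ A (run w n)) \/
  exists n', n < n' /\ is_answer (@col _ A (run w n)) (@col _ A (run w n')) /\
             seg_cost w n n' <= k.

Definition limsup_cor_le (w : nat -> Sigma) (k : nat) : Prop :=
  exists N, forall n, N <= n -> cor_le w n k.

Definition accepts (w : nat -> Sigma) : Prop := exists k, limsup_cor_le w k.

Definition finitary_buchi : Prop :=
  (forall q a, @incr _ A q a) /\ (forall c, c \in codom (@col _ A) <-> (c = 1 \/ c = 2)).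

End Aut.

Definition fj (j : nat) : nat -> nat := fun i => if i is 0 then j.+1 else 1.

Section Delay.
Variables (SI SO : finType) (A : pcaut (SI * SO)%type) (f : nat -> nat).

(* A play of Gamma_f is determined by Player I's moves u_0 u_1 ..., i.e. by the
   infinite input word alpha = u_0 u_1 ... (with |u_i| = f i). Player O's move in
   round i is tau (u_0 ... u_i) = tau (prefix of alpha of length f 0 + ... + f i). *)
Definition outcome (tau : seq SI -> SO) (alpha : nat -> SI) : nat -> (SI * SO)%type :=
  fun i => (alpha i, tau (mkseq alpha (\sum_(k < i.+1) f k))).

Definition winning (tau : seq SI -> SO) : Prop :=
  forall alpha, accepts A (outcome tau alpha).

Definition cost_le (tau : seq SI -> SO) (k : nat) : Prop :=
  forall alpha, limsup_cor_le A (outcome tau alpha) k.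

Definition has_cost (tau : seq SI -> SO) (k : nat) : Prop :=
  cost_le tau k /\ forall k', cost_le tau k' -> k <= k'.

Definition optimal_with_cost (tau : seq SI -> SO) (k : nat) : Prop :=
  [/\ winning tau, has_cost tau k &
      forall tau', winning tau' -> forall k', cost_le tau' k' -> k <= k'].

End Delay.

(* Main.v *)
Require Import Defs.
From mathcomp Require Import all_boot zify.
Set Implicit Arguments. Unset Strict Implicit. Unset Printing Implicit Defensive.

Section Auto.
Variable m : nat.
Definition stT : finType := option ('I_m.+1 * option ('I_m.+1 * bool)).
Definition Sig : finType := (bool * option bool)%type.

Definition dlt (q : stT) (a : Sig) : stT :=
  match q with
  | None => None
  | Some (k, pend) =>
    let r := match pend with
             | Some (d, b) => if nat_of_ord k == nat_of_ord d then (if a.1 == b then Some None else None)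
                              else Some pend
             | None => Some None end in
    match r with
    | None => None
    | Some pend' =>
      match a.2 with
      | Some b => if pend' is Some _ then None
                  else if nat_of_ord k == m then (if a.1 == b then Some (ord0, None) else None)
                  else Some (ord0, Some (inord (m - k - 1), b))
      | None => if nat_of_ord k == m then None else Some (inord k.+1, pend')
      end
    end
  end.

Definition colf (q : stT) : nat :=
  if q is Some (k, _) then (if nat_of_ord k == 0 then 2 else 1) else 1.

Definition Aut : pcaut Sig := @PCAut Sig stT (Some (ord0, None)) dlt colf (fun _ _ => true).

Lemma dlt_commit k pend x b :
  dlt (Some (k, pend)) (x, Some b) <> None -> nat_of_ord k != m ->
  dlt (Some (k, pend)) (x, Some b) = Some (ord0, Some (inord (m - k - 1), b)).
Proof.
rewrite /dlt /=; case: pend => [[d b0]|] /=; last by move=> _ /negbTE ->.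
by case: ifP => // _; case: ifP => // _ _ /negbTE ->.
Qed.

Lemma dlt_wait k pend x q :
  dlt (Some (k, pend)) (x, None) = Some q -> nat_of_ord q.1 = (nat_of_ord k).+1.
Proof.
have H : nat_of_ord k != m -> nat_of_ord (inord k.+1 : 'I_m.+1) = (nat_of_ord k).+1.
  by move=> Hk; rewrite inordK //; move: Hk (ltn_ord k) => /= Hk Hk2; lia.
rewrite /dlt /=; case: pend => [[d b0]|] /=.
  case: ifP => _; [case: ifP => // _|]; case: ifP => // /negbT Hk [<-]; exact: H.
case: ifP => // /negbT Hk [<-]; exact: H.
Qed.

Lemma dlt_keep k d b x :
  nat_of_ord k != nat_of_ord d -> nat_of_ord k != m ->
  dlt (Some (k, Some (d, b))) (x, None) = Some (inord k.+1, Some (d, b)).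
Proof. by rewrite /dlt /= => /negbTE -> /negbTE ->. Qed.

Lemma dlt_fail k d b x y :
  nat_of_ord k = nat_of_ord d -> x != b -> dlt (Some (k, Some (d, b))) (x, y) = None.
Proof. by rewrite /dlt /= => -> /negbTE ->; rewrite eqxx. Qed.

Lemma dlt_keep_commit k d b x b' :
  nat_of_ord k != nat_of_ord d -> dlt (Some (k, Some (d, b))) (x, Some b') = None.
Proof. by rewrite /dlt /= => /negbTE ->. Qed.

End Auto.

Lemma run_ext (Sigma : finType) (A : pcaut Sigma) (w w' : nat -> Sigma) n :
  (forall i, i < n -> w i = w' i) -> run A w n = run A w' n.
Proof.
elim: n => [|n IH] H //=; rewrite IH ?H // => i Hi; apply: H; lia.
Qed.

Lemma sum_fj j i : \sum_(k < i.+1) fj j k = i + j.+1.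
Proof.
elim: i => [|i IH]; first by rewrite big_ord_recr big_ord0.
by rewrite big_ord_recr IH /=; lia.
Qed.

Lemma outcomeE (SI SO : finType) j (tau : seq SI -> SO) alpha i :
  outcome (fj j) tau alpha i = (alpha i, tau (mkseq alpha (i + j.+1))).
Proof. by rewrite /outcome sum_fj. Qed.

Lemma seg_costE m w a b : seg_cost (Aut m) w a b = b - a.
Proof.
rewrite /seg_cost /=.
by rewrite (@eq_count _ _ predT) ?count_predT ?size_iota.
Qed.

Lemma colf_run_is2 m (q : stT m) : colf q = 2 -> exists k pend, q = Some (k, pend) /\ nat_of_ord k = 0.
Proof.
case: q => [[k pend]|] //=; case: ifP => // /eqP Hk _; by exists k, pend.
Qed.

Lemma colf_12 m (q : stT m) : colf q = 1 \/ colf q = 2.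
Proof. case: q => [[k pend]|] /=; [case: ifP|]; auto. Qed.

Lemma two_in_codom m : 2 \in codom (@colf m).
Proof. by have -> : 2 = colf (Some (ord0, None) : stT m) by []; exact: codom_f. Qed.

Section Upper.
Variables (m j : nat).
Hypothesis Hj : 2 * j < m.
Let L := (m - j).+1.

Definition tauU (s : seq bool) : option bool :=
  if (size s - j.+1) %% L == m - j then Some (last false s) else None.

Variable alpha : nat -> bool.
Let w := outcome (fj j) tauU alpha.

Lemma wE i : w i = (alpha i, if i %% L == m - j then Some (alpha (i + j)) else None).
Proof.
rewrite /w outcomeE /tauU size_mkseq.
have -> : i + j.+1 - j.+1 = i by lia.
case: ifP => // _; rewrite -nth_last size_mkseq nth_mkseq; last by lia.
by congr (_, Some (alpha _)); lia.
Qed.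

Definition Inv r l := exists k pend, run (Aut m) w (r * L + l) = Some (k, pend) /\ nat_of_ord k = l /\
   (pend = None \/ exists d b, pend = Some (d, b) /\ l <= d < m - j /\ b = alpha (r * L + d)).

Lemma Inv_step r l : l < m - j -> Inv r l -> Inv r l.+1.
Proof.
move=> Hl [k [pend [Hr [Hk Hp]]]].
have Hpos : (r * L + l) %% L = l by rewrite modnMDl modn_small //; rewrite /L; lia.
rewrite /Inv addnS /= Hr wE Hpos.
have -> : (l == m - j) = false by apply/eqP; lia.
rewrite /dlt /=.
have -> : (nat_of_ord k == m) = false by apply/eqP; lia.
have Hin : nat_of_ord (inord k.+1 : 'I_m.+1) = l.+1 by rewrite inordK; lia.
case: Hp => [->|[d [b [-> [Hd Hb]]]]].
  by exists (inord k.+1), None; split => //; split => //; left.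
case: ifP => [/eqP Hkd|/negbT Hkd].
  rewrite -Hkd Hk in Hb; rewrite Hb eqxx.
  by exists (inord k.+1), None; split => //; split => //; left.
exists (inord k.+1), (Some (d, b)); split => //; split => //; right.
exists d, b; split => //; split => //; move: Hkd; rewrite Hk => /eqP; lia.
Qed.

Lemma Inv_next r : Inv r (m - j) -> Inv r.+1 0.
Proof.
move=> [k [pend [Hr [Hk Hp]]]].
have Hpos : (r * L + (m - j)) %% L = m - j by rewrite modnMDl modn_small //; rewrite /L; lia.
have HrL : r.+1 * L + 0 = (r * L + (m - j)).+1 by rewrite mulSn /L; lia.
rewrite /Inv HrL /= Hr wE Hpos eqxx.
case: Hp => [->|[d [b [_ [Hd _]]]]]; last by lia.
rewrite /dlt /=.
case: (eqVneq j 0) => [Hj0|Hj0].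
  have -> : (nat_of_ord k == m) = true by apply/eqP; lia.
  rewrite Hj0 addn0 eqxx.
  by exists ord0, None; split => //; split => //; left.
have -> : (nat_of_ord k == m) = false by apply/eqP; lia.
exists ord0, (Some (inord (m - k - 1), alpha (r * L + (m - j) + j))); split => //; split => //.
right; exists (inord (m - k - 1)), (alpha (r * L + (m - j) + j)); split => //.
rewrite inordK; last by lia.
split; first by rewrite /L; lia.
congr (alpha _); rewrite mulSn /L; lia.
Qed.

Lemma Inv_all r l : l <= m - j -> Inv r l.
Proof.
elim: r l => [|r IHr] l.
  elim: l => [|l IH] Hl.
    by exists ord0, None; split => //; split => //; left.
  apply: Inv_step; [lia|apply: IH; lia].
elim: l => [|l IH] Hl.
  by apply: Inv_next; apply: IHr.
apply: Inv_step; [lia|apply: IH; lia].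
Qed.

End Upper.

Lemma upper_cost m j (Hj : 2 * j < m) : cost_le (Aut m) (fj j) (tauU m j) (m - j).
Proof.
pose L := (m - j).+1.
move=> a; exists 0 => n _.
rewrite /cor_le.
have Hn := divn_eq n L.
have HlL : n %% L < L by apply: ltn_pmod.
have [k [pend [Hr [Hk _]]]] := @Inv_all m j Hj a (n %/ L) (n %% L) (ltac:(rewrite /L in HlL; lia)).
rewrite -Hn in Hr.
case: (eqVneq (n %% L) 0) => [H0|H0].
  by left; rewrite /= Hr /= Hk H0.
right.
have [k' [pend' [Hr' [Hk' _]]]] := @Inv_all m j Hj a (n %/ L).+1 0 (leq0n _).
exists ((n %/ L).+1 * L + 0); split; first by rewrite mulSn; lia.
rewrite /L in Hr Hr' H0 *; rewrite Hr Hr' /= Hk Hk' (negbTE H0) /is_answer /=.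
split; first by rewrite two_in_codom.
rewrite seg_costE mulSn; lia.
Qed.

Lemma even_colf m (q : stT m) : ~~ odd (colf q) -> colf q = 2.
Proof. by case: (colf_12 q) => ->. Qed.

Section Lower.
Variables (m j : nat).
Hypothesis Hj : j < m.
Variable tau' : seq bool -> option bool.

Definition wsim (s : seq bool) (i : nat) : Sig := (nth false s i, tau' (take (i + j.+1) s)).

Definition adv (s : seq bool) : bool :=
  match run (Aut m) (wsim s) (size s - j) with
  | Some (k, Some (d, b)) => if (nat_of_ord k <= d) && (d - k == j) then ~~ b else false
  | _ => false
  end.

Fixpoint pre t := if t is t'.+1 then rcons (pre t') (adv (pre t')) else [::].
Definition alphaL t := adv (pre t).

Lemma pre_mk t : pre t = mkseq alphaL t.
Proof. by elim: t => [|t IH] //=; rewrite mkseqS -IH. Qed.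

Let w := outcome (fj j) tau' alphaL.

Lemma take_mk k t : k <= t -> take k (mkseq alphaL t) = mkseq alphaL k.
Proof.
move=> Hk; rewrite /mkseq -map_take take_iota.
by have -> : minn k t = k by lia.
Qed.

Lemma alphaE t : alphaL t =
  match run (Aut m) w (t - j) with
  | Some (k, Some (d, b)) => if (nat_of_ord k <= d) && (d - k == j) then ~~ b else false
  | _ => false
  end.
Proof.
rewrite /alphaL /adv.
have -> : size (pre t) = t by rewrite pre_mk size_mkseq.
rewrite (@run_ext _ _ (wsim (pre t)) w) //.
move=> i Hi; rewrite /w outcomeE /wsim pre_mk nth_mkseq; last by lia.
by rewrite take_mk //; lia.
Qed.

Hypothesis Hwin : winning (Aut m) (fj j) tau'.

Lemma nosink n : run (Aut m) w n <> None.
Proof.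
move=> Hn.
have Hs : forall l, run (Aut m) w (n + l) = None.
  by elim=> [|l IH]; rewrite ?addn0 // addnS /= IH.
have [K [N0 HN]] := Hwin alphaL.
case: (HN (n + N0) (leq_addl _ _)) => [|[n' [Hn' [Ha _]]]].
  by rewrite Hs.
move: Ha; rewrite /is_answer Hs.
have -> : n' = n + (n' - n) by lia.
by rewrite Hs => /and3P [_ H _].
Qed.

Lemma pend_run p i (k : 'I_m.+1) b :
  i < m - j -> nat_of_ord k = i ->
  run (Aut m) w p = Some (ord0, Some (inord (m - k - 1), b)) ->
  forall l, l <= m - i - 1 ->
  exists k', run (Aut m) w (p + l) = Some (k', Some (inord (m - k - 1), b)) /\ nat_of_ord k' = l.
Proof.
move=> Hi Hk Hp; elim=> [|l IH] Hl; first by exists ord0; rewrite addn0.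
have [k' [Hr Hk']] := IH (ltnW Hl).
have Hn := @nosink (p + l).+1.
rewrite addnS /= Hr in Hn *.
have Hd : nat_of_ord (inord (m - k - 1) : 'I_m.+1) = m - i - 1 by rewrite inordK; lia.
case Ew: (w (p + l)) => [x [b'|]]; rewrite Ew in Hn.
  rewrite dlt_keep_commit in Hn; first by case: Hn.
  by rewrite Hd; lia.
rewrite dlt_keep; first (exists (inord k'.+1); split => //; rewrite inordK; lia).
  by rewrite Hd; lia.
by lia.
Qed.

Lemma round p k0 pend0 : run (Aut m) w p = Some (k0, pend0) -> nat_of_ord k0 = 0 ->
  forall i, i <= m - j -> exists k pend, run (Aut m) w (p + i) = Some (k, pend) /\ nat_of_ord k = i.
Proof.
move=> Hp Hk0; elim=> [|i IH] Hi; first by exists k0, pend0; rewrite addn0.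
have [k [pend [Hr Hk]]] := IH (ltnW Hi).
have Hn := @nosink (p + i).+1.
rewrite addnS /= Hr in Hn *.
case Ew: (w (p + i)) => [x [b|]]; rewrite Ew in Hn *.
  exfalso.
  have Hc := dlt_commit Hn (ltac:(apply/eqP; lia)).
  have Hr1 : run (Aut m) w (p + i).+1 = Some (ord0, Some (inord (m - k - 1), b)).
    by rewrite /= Hr Ew Hc.
  have Hd : nat_of_ord (inord (m - k - 1) : 'I_m.+1) = m - i - 1 by rewrite inordK; lia.
  have Hi2 : i < m - j by lia.
  have [k1 [Hr2 Hk1]] := pend_run Hi2 Hk Hr1 (l := m - i - 1 - j) (ltac:(lia)).
  have [k2 [Hr3 Hk2]] := pend_run Hi2 Hk Hr1 (leqnn (m - i - 1)).
  set t := (p + i).+1 + (m - i - 1).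
  have Ha : alphaL t = ~~ b.
    rewrite alphaE.
    have -> : t - j = (p + i).+1 + (m - i - 1 - j) by rewrite /t; lia.
    rewrite Hr2 Hd Hk1.
    have -> : (m - i - 1 - j <= m - i - 1) && (m - i - 1 - (m - i - 1 - j) == j) = true.
      by apply/andP; split; apply/eqP || idtac; lia.
    by [].
  have Hn2 := @nosink t.+1.
  have Hr3t : run (Aut m) w t = Some (k2, Some (inord (m - k - 1), b)) := Hr3.
  have E : run (Aut m) w t.+1 = dlt (run (Aut m) w t) (w t) by [].
  rewrite E Hr3t in Hn2.
  have Ewt : w t = (alphaL t, (w t).2) by rewrite /w outcomeE.
  rewrite Ewt Ha dlt_fail in Hn2 => //; first by rewrite Hk2 Hd.
  by case: (b).
case Ed: (dlt (Some (k, pend)) (x, None)) Hn => [q|] // _.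
have := dlt_wait Ed; case: q Ed => k' pend' Ed /= Hk'.
by exists k', pend'; split => //; lia.
Qed.

Lemma lower k' : cost_le (Aut m) (fj j) tau' k' -> m - j <= k'.
Proof.
move=> Hc; rewrite leqNgt; apply/negP => Hlt.
have [N HN] := Hc alphaL.
have [p [Hp Hp2]] : exists p, N <= p /\ colf (run (Aut m) w p) = 2.
  case: (HN N (leqnn N)) => [Hev|[n' [Hn' [Ha _]]]].
    by exists N; split => //; apply: even_colf.
  exists n'; split; first by lia.
  by apply: even_colf; move: Ha => /and3P [_ _].
have [k0 [pend0 [Hr0 Hk0]]] := colf_run_is2 Hp2.
have Hround := round Hr0 Hk0.
have [k1 [pend1 [Hr1 Hk1]]] := Hround 1 (ltac:(lia)).
case: (HN (p + 1) (ltac:(lia))) => [|[n' [Hn' [Ha Hs]]]].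
  by rewrite /= Hr1 /= Hk1.
move: Hs; rewrite seg_costE => Hs.
have := Hround (n' - p) (ltac:(lia)).
move=> [k2 [pend2 [Hr2 Hk2]]].
have Hcol := even_colf (ltac:(move: Ha => /and3P [_ _]; exact)).
move: Hcol; have -> : n' = p + (n' - p) by lia.
rewrite /= Hr2 /= Hk2.
have -> : (n' - p == 0) = false by apply/eqP; lia.
by [].
Qed.

End Lower.

Theorem theorem7 :
  exists c : nat, forall n : nat, 0 < n ->
    exists (SI SO : finType) (A : pcaut (SI * SO)%type),
      finitary_buchi A /\ #|st A| <= c * n ^ 2 /\
      forall j, j <= n ->
        exists tau : seq SI -> SO,
          optimal_with_cost A (fj j) tau (2 * n.+1 - j).
Proof.
exists 60 => n Hn.
pose m := 2 * n.+1.
exists bool, (option bool), (Aut m).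
split.
  split => // c; split.
    by move=> /codomP [q ->] /=; case: (colf_12 q) => ->; auto.
  case=> ->; last exact: two_in_codom.
  by have -> : 1 = colf (None : stT m) by []; exact: codom_f.
split.
  rewrite /= /stT card_option card_prod card_option card_prod !card_ord card_bool /m.
  nia.
move=> j Hjn.
have Hj : 2 * j < m by rewrite /m; lia.
have Hj' : j < m by lia.
have Hup := upper_cost Hj.
have Hwin : winning (Aut m) (fj j) (tauU m j).
  by move=> a; exists (m - j); apply: Hup.
exists (tauU m j); split => //.
  split => // k' Hk'.
  exact: (@lower m j Hj' (tauU m j) Hwin k' Hk').
move=> tau' Hw' k' Hk'.
exact: (@lower m j Hj' tau' Hw' k' Hk').
Qed.
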